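(* Let $n>1$ and let $a_1,\dots,a_n$ be regular closed subsets of $\mathbb{R}^2$ such that $\mathrm{int}(a_i\cup\dots\cup a_n)$ is connected for each $1\le i\le n$, $a_i\cdot a_j=\emptyset$ for all $1\le i<j\le n$, and $a_i\cap a_j=\emptyset$ for all $1\le i<j\le n$ with $j-i>1$. Then every point $p_1\in\mathrm{int}(a_1)$ can be connected to every point $p_n\in\mathrm{int}(a_n)$ by a Jordan arc $\alpha=\alpha_1\cdots\alpha_{n-1}$ such that, for all $1\le i<n$, $\alpha_i$ is a non-degenerate Jordan arc in $\mathrm{int}(a_i\cup a_{i+1})$ starting at a point $p_i\in\mathrm{int}(a_i)$.
   Context: $a\cdot b$ denotes $\overline{\mathrm{int}(a\cap b)}$. A Jordan arc is a continuous injective map $[0,1]\to\mathbb{R}^2$ (non-degenerate) or a constant map (degenerate), identified with its image. $\alpha=\alpha_1\cdots\alpha_{n-1}$ denotes a Jordan arc from $p_1$ to $p_n$ that is the concatenation of the arcs $\alpha_1,\dots,\alpha_{n-1}$ in order, each $\alpha_i$ ending where $\alpha_{i+1}$ begins. *)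

(* Defs.v *)
(* The plane R^2 is modelled as R * R with the product
   topology, for an arbitrary R : realType (a complete archimedean ordered field,
   i.e. the reals). *)
From HB Require Import structures.
From mathcomp Require Import all_boot all_order all_algebra.
From mathcomp Require Import all_classical all_reals all_analysis.
Set Implicit Arguments. Unset Strict Implicit. Unset Printing Implicit Defensive.
Import Order.TTheory GRing.Theory Num.Theory.
Import numFieldNormedType.Exports.
Local Open Scope classical_set_scope.
Local Open Scope ring_scope.

Definition regular_closed {T : topologicalType} (a : set T) : Prop :=
  closure (a°) = a.

Definition rdot {T : topologicalType} (a b : set T) : set T :=
  closure ((a `&` b)°).

Definition jordan_param {R : realType} (g : R -> R * R) (s t : R) : Prop :=
  {within `[s, t]%classic, continuous g} /\ {in `[s, t]%classic &, injective g}.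

Definition arc_image {R : realType} (g : R -> R * R) (s t : R) : set (R * R) :=
  g @` `[s, t]%classic.

Definition union_from {T : Type} (a : nat -> set T) (i n : nat) : set T :=
  [set x | exists2 j, (i <= j <= n)%N & a j x].

(* Main.v *)
Require Import Defs.
From HB Require Import structures.
From mathcomp Require Import all_boot all_order all_algebra.
From mathcomp Require Import all_classical all_reals all_analysis.
From mathcomp Require Import ring lra zify.
Import Order.TTheory GRing.Theory Num.Theory.
Import numFieldNormedType.Exports.
Set Implicit Arguments. Unset Strict Implicit. Unset Printing Implicit Defensive.
Local Open Scope classical_set_scope.
Local Open Scope ring_scope.

Section Poly.
Variable R : realType.
Implicit Types (u v w p q y z : R * R) (s : seq (R * R)) (l m : R).

Definition lerp u v l : R * R := (u.1 + l * (v.1 - u.1), u.2 + l * (v.2 - u.2)).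
Definition seg u v : set (R * R) := [set w | exists2 l, 0 <= l <= 1 & w = lerp u v l].
Fixpoint img p s : set (R * R) :=
  match s with [::] => [set p] | v :: s' => seg p v `|` img v s' end.
Fixpoint simple p s : Prop :=
  match s with [::] => True
  | v :: s' => [/\ p <> v, simple v s' & seg p v `&` img v s' `<=` [set v]] end.

Lemma lerp0 u v : lerp u v 0 = u.
Proof. by case: u => a b; rewrite /lerp !mul0r !addr0. Qed.
Lemma lerp1 u v : lerp u v 1 = v.
Proof. by case: u v => a b [c d]; rewrite /lerp !mul1r /= !(addrC a) !(addrC b) !subrK. Qed.
Lemma lerpM u v l m : lerp u (lerp u v m) l = lerp u v (l * m).
Proof. rewrite /lerp /=; congr pair; ring. Qed.
Lemma lerpR u v l m : lerp (lerp u v m) v l = lerp u v (m + l * (1 - m)).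
Proof. rewrite /lerp /=; congr pair; ring. Qed.
Lemma lerpN u v l : lerp u v l = lerp v u (1 - l).
Proof. rewrite /lerp /=; congr pair; ring. Qed.

Lemma lerp_inj u v l m : u <> v -> lerp u v l = lerp u v m -> l = m.
Proof.
case: u v => a b [c d] /= uv [] E1 E2.
apply/eqP; apply/negP => /negP lm; apply: uv.
have h1 : (l - m) * (c - a) = 0 by rewrite mulrBl; apply/eqP; rewrite subr_eq0; apply/eqP; apply: (addrI a).
have h2 : (l - m) * (d - b) = 0 by rewrite mulrBl; apply/eqP; rewrite subr_eq0; apply/eqP; apply: (addrI b).
have lm0 : l - m != 0 by rewrite subr_eq0.
move/eqP: h1; rewrite mulf_eq0 (negbTE lm0) /= subr_eq0 => /eqP ->.
by move/eqP: h2; rewrite mulf_eq0 (negbTE lm0) /= subr_eq0 => /eqP ->.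
Qed.

Lemma seg_l u v : seg u v u.
Proof. by exists 0; rewrite ?lerp0 // lexx ler01. Qed.
Lemma seg_r u v : seg u v v.
Proof. by exists 1; rewrite ?lerp1 // lexx ler01. Qed.
Lemma segC u v : seg u v `<=` seg v u.
Proof.
move=> w [l /andP[l0 l1] ->]; exists (1 - l); last exact: lerpN.
by rewrite subr_ge0 l1 /= lerBlDr lerDl.
Qed.
Lemma seg_subl u v z : seg u v z -> seg u z `<=` seg u v.
Proof.
move=> [m /andP[m0 m1] ->] w [l /andP[l0 l1] ->]; exists (l * m); last exact: lerpM.
by rewrite mulr_ge0 //= mulr_ile1.
Qed.
Lemma seg_subr u v z : seg u v z -> seg z v `<=` seg u v.
Proof.
move=> [m /andP[m0 m1] ->] w [l /andP[l0 l1] ->]; exists (m + l * (1 - m)); last exact: lerpR.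
apply/andP; split; first by rewrite addr_ge0 // mulr_ge0 // subr_ge0.
have : l * (1 - m) <= 1 - m by rewrite ler_piMl // subr_ge0.
by rewrite -lerBrDl.
Qed.

Lemma img_head p s : img p s p.
Proof. by case: s => [|v s] /=; [|left; exact: seg_l]. Qed.
Lemma img_last p s : img p s (last p s).
Proof. by elim: s p => [|v s IH] p //=; right; apply: IH. Qed.
Lemma img_cat p s1 s2 : img p (s1 ++ s2) = img p s1 `|` img (last p s1) s2.
Proof.
elim: s1 p => [|v s IH] p /=.
  by apply/seteqP; split=> x; [right|case=> [->|//]; exact: img_head].
by rewrite IH setUA.
Qed.
Lemma img_rcons p s y : img p (rcons s y) = img p s `|` seg (last p s) y.
Proof.
rewrite -cats1 img_cat /=; congr (_ `|` _).
by rewrite setUidl // => x ->; exact: seg_r.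
Qed.

Lemma lerp_cont u v : continuous (lerp u v).
Proof.
move=> x; rewrite /lerp.
have c1 : continuous (fun l : R => u.1 + l * (v.1 - u.1)).
  by move=> y; apply: cvgD; [exact: cvg_cst| apply: cvgMl; exact: cvg_id].
have c2 : continuous (fun l : R => u.2 + l * (v.2 - u.2)).
  by move=> y; apply: cvgD; [exact: cvg_cst| apply: cvgMl; exact: cvg_id].
exact: (cvg_pair (c1 x) (c2 x)).
Qed.

Lemma seg_closed u v : closed (seg u v).
Proof.
have -> : seg u v = [set lerp u v l | l in `[0, 1]].
  apply/seteqP; split=> w.
    by move=> [l l01 ->]; exists l => //; rewrite /= in_itv.
  by move=> [l l01 <-]; exists l => //; move: l01; rewrite /= in_itv.
apply: compact_closed; first exact: norm_hausdorff.
apply: continuous_compact; last exact: segment_compact.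
exact/continuous_subspaceT/lerp_cont.
Qed.

Lemma img_closed p s : closed (img p s).
Proof.
elim: s p => [|v s IH] p /=.
  rewrite (_ : [set p] = seg p p); first exact: seg_closed.
  apply/seteqP; split=> x; first by move=> ->; exact: seg_l.
  by case=> l _ ->; case: p => a b; rewrite /lerp /= !subrr !mulr0 !addr0.
by apply: closedU; [exact: seg_closed|exact: IH].
Qed.

End Poly.


Section Poly2.
Variable R : realType.
Implicit Types (u v w p q y z : R * R) (s : seq (R * R)) (l m : R) (K : set (R * R)).

Lemma first_hit K u v l0 : closed K -> 0 <= l0 <= 1 -> K (lerp u v l0) ->
  exists l, [/\ 0 <= l <= 1, K (lerp u v l) &
    forall m, 0 <= m -> m < l -> ~ K (lerp u v m)].
Proof.
move=> cK l01 Kl0.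
pose A := `[(0:R), 1] `&` (lerp u v @^-1` K).
have cA : closed A.
  apply: closedI; first exact: itv_closed.
  by move/continuous_closedP: (lerp_cont (u:=u) (v:=v)); apply.
have A0 : A l0 by split => //=; rewrite in_itv.
have lbA : has_lbound A by exists 0 => x [] /=; rewrite in_itv => /andP[].
have Ai : A (inf A).
  apply: (itv_closed_infimums (ex_intro _ l0 A0) cA); split; first exact: ge_inf.
  by move=> y ly; apply: lb_le_inf => //; exists l0.
exists (inf A); split.
- by case: Ai; rewrite /= in_itv.
- by case: Ai.
- move=> m m0 mi Km.
  have Am : A m.
    split => //=; rewrite in_itv /= m0 /=.
    apply: ltW; apply: (lt_le_trans mi); case: Ai; rewrite /= in_itv /= => /andP[_ ->] //.
  by move: (ge_inf lbA Am); rewrite leNgt mi.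
Qed.

Lemma last_hit K u v l0 : closed K -> 0 <= l0 <= 1 -> K (lerp u v l0) ->
  exists l, [/\ 0 <= l <= 1, K (lerp u v l) &
    forall m, m <= 1 -> l < m -> ~ K (lerp u v m)].
Proof.
move=> cK /andP[a0 a1] Kl0.
have [||l [/andP[h0 h1] Kl H]] := first_hit (u := v) (v := u) (l0 := 1 - l0) cK.
- by rewrite subr_ge0 a1 /= lerBlDr lerDl.
- by rewrite -lerpN.
exists (1 - l); split.
- by rewrite subr_ge0 h1 /= lerBlDr lerDl.
- by rewrite lerpN opprB addrC subrK.
- move=> m m1 lm Km; apply: (H (1 - m)).
  + by rewrite subr_ge0.
  + lra.
  + by rewrite -lerpN.
Qed.

Lemma suffix p s z : simple p s -> img p s z ->
  exists s', [/\ simple z s', last z s' = last p s & img z s' `<=` img p s].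
Proof.
elim: s p => [|v s IH] p /=.
  move=> _ zp; have -> : z = p by exact: zp.
  by exists [::]; split => //=.
move=> [pv sv segv] [zs|zi]; last first.
  have [s' [h1 h2 h3]] := IH v sv zi.
  by exists s'; split => // x /h3 ?; right.
have [->|zv] := eqVneq z v.
  by exists s; split => // x ?; right.
exists (v :: s); split => //=.
- split => //; first exact/eqP.
  by move=> x [/(seg_subr zs) ? ?]; apply: segv.
- move=> x [/(seg_subr zs) ?|?]; [by left|by right].
Qed.

Lemma prefix p s z : simple p s -> img p s z ->
  exists s', [/\ simple p s', last p s' = z & img p s' `<=` img p s].
Proof.
elim: s p => [|v s IH] p /=.
  move=> _ zp; have -> : z = p by exact: zp.
  by exists [::]; split => //=.
move=> [pv sv segv] [zs|zi].
  have [<-|pz] := eqVneq p z.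
    exists [::]; split => // x /= xp; have -> : x = p by exact: xp.
    by left; exact: seg_l.
  exists [:: z]; split => //=.
  - split. exact/eqP. done. move=> x [_ xz]; exact: xz.
  - move=> x [/(seg_subl zs) ?|xz]; left => //.
    have -> : x = z by exact: xz.
    exact: zs.
have [s' [h1 h2 h3]] := IH v sv zi.
exists (v :: s'); split => //=.
- split => //. by move=> x [? /h3 ?]; apply: segv.
- by move=> x [?|/h3 ?]; [left|right].
Qed.

Lemma simplify p s :
  exists s', [/\ simple p s', last p s' = last p s & img p s' `<=` img p s].
Proof.
elim: s p => [|v s IH] p /=.
  by exists [::]; split => //=.
have [s1 [h1 h2 h3]] := IH v.
have [||l [/andP[l0 l1] Kl H]] := first_hit (u := p) (v := v) (l0 := 1) (img_closed (p:=v) (s:=s1)).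
- by rewrite ler01 lexx.
- by rewrite lerp1; exact: img_head.
have [s2 [g1 g2 g3]] := suffix h1 Kl.
have [l0'|lpos] := eqVneq l 0.
  move: Kl g1 g2 g3; rewrite l0' lerp0 => Kl g1 g2 g3.
  exists s2; split.
  - exact: g1.
  - by rewrite g2 h2.
  - move=> x /g3 /h3 ?; by right.
have lp : 0 < l by rewrite lt_neqAle eq_sym lpos l0.
exists (lerp p v l :: s2); split => /=.
- split => //.
  + move=> E; apply: (H 0 (lexx _) lp); by rewrite lerp0 E.
  + move=> x [[m /andP[m0 m1] ->] /g3 Kx].
    rewrite lerpM in Kx *.
    have : ~ (m * l < l) by move=> ml; apply: (H (m * l)) => //; exact: mulr_ge0.
    move/negP; rewrite -leNgt => hl.
    have -> : m = 1.
      apply/eqP; rewrite eq_le m1 /=.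
      by rewrite -(ler_pM2r lp) mul1r.
    by rewrite mul1r.
- by rewrite g2 h2.
- move=> x [sx|/g3 /h3 ?]; last by right.
  have zs : seg p v (lerp p v l) by exists l => //; rewrite l0 l1.
  left; exact: (seg_subl zs sx).
Qed.

Lemma hit K p s : closed K -> (exists x, img p s x /\ K x) ->
  exists y s', [/\ K y, img y s' `<=` img p s, img y s' `&` K `<=` [set y]
     & last y s' = last p s].
Proof.
move=> cK; elim: s p => [|v s IH] p /=.
  move=> [x [-> Kx]]; exists p, [::]; split => //=.
have [[x [xi Kx]] _|nx] := pselect (exists x, img v s x /\ K x).
  have [y [s' [h1 h2 h3 h4]]] := IH v (ex_intro _ x (conj xi Kx)).
  by exists y, s'; split => // z /h2 ?; right.
move=> [x [[xs|xi] Kx]]; last by exfalso; apply: nx; exists x.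
case: xs => l0 l01 xE; rewrite xE in Kx.
have [l [/andP[l0' l1] Kl H]] := last_hit cK l01 Kx.
have l1' : l < 1.
  rewrite lt_neqAle l1 andbT; apply/eqP => E; apply: nx; exists v; split.
  - exact: img_head.
  - by rewrite -(lerp1 p v) -E.
exists (lerp p v l), (v :: s); split => //=.
- move=> z [zs|zi]; last by right.
  have ys : seg p v (lerp p v l) by exists l => //; rewrite l0' l1.
  left; exact: (seg_subr ys zs).
- move=> z [[zs|zi] Kz]; last by exfalso; apply: nx; exists z.
  case: zs => m /andP[m0 m1] zE; rewrite zE lerpR in Kz *.
  have [m0'|mpos] := eqVneq m 0; first by rewrite m0' mul0r addr0.
  exfalso; apply: (H (l + m * (1 - l))) => //.
  + have : m * (1 - l) <= 1 - l by rewrite ler_piMl // subr_ge0 ltW.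
    by rewrite -lerBrDl.
  + rewrite ltrDl mulr_gt0 // ?subr_gt0 //.
    by rewrite lt_neqAle eq_sym mpos m0.
Qed.

End Poly2.


Section Arc.
Variable R : realType.
Implicit Types (u v w p q y z : R * R) (s : seq (R * R)) (l m t : R).

Definition clamp t : R := Num.min (Num.max t 0) 1.
Fixpoint G p s t : R * R :=
  match s with
  | [::] => p
  | v :: s' => ((lerp p v (clamp t)).1 + ((G v s' (t - 1)).1 - v.1),
                (lerp p v (clamp t)).2 + ((G v s' (t - 1)).2 - v.2))
  end.

Lemma clamp0 t : t <= 0 -> clamp t = 0.
Proof. move=> t0; rewrite /clamp; have -> : Num.max t 0 = 0 by apply/max_idPr. by apply/min_idPl; rewrite ler01. Qed.
Lemma clamp1 t : 1 <= t -> clamp t = 1.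
Proof. move=> t1; rewrite /clamp; have -> : Num.max t 0 = t by apply/max_idPl; lra. by apply/min_idPr. Qed.
Lemma clampid t : 0 <= t <= 1 -> clamp t = t.
Proof. move=> /andP[t0 t1]; rewrite /clamp; have -> : Num.max t 0 = t by apply/max_idPl. by apply/min_idPl. Qed.

Lemma G_le0 p s t : t <= 0 -> G p s t = p.
Proof.
elim: s p t => [|v s IH] p t //= t0.
rewrite clamp0 // (IH v (t - 1)); last by lra.
by case: p => a b /=; congr pair; ring.
Qed.

Lemma G_ge1 p v s t : 1 <= t -> G p (v :: s) t = G v s (t - 1).
Proof.
move=> t1 /=; rewrite clamp1 //.
by case: (G v s (t - 1)) => a b; case: v => c d /=; congr pair; ring.
Qed.

Lemma G_01 p v s t : 0 <= t <= 1 -> G p (v :: s) t = lerp p v t.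
Proof.
move=> /andP[t0 t1] /=; rewrite clampid ?t0 ?t1 // G_le0; last by lra.
by rewrite /lerp /= !subrr !addr0.
Qed.

Lemma G_img p s t : 0 <= t <= (size s)%:R -> img p s (G p s t).
Proof.
elim: s p t => [|v s IH] p t /=.
  by move=> _.
move=> /andP[t0 ts].
have [t1|t1] := lerP t 1.
  left; rewrite -/(G p (v :: s) t) G_01 ?t0 ?t1 //.
  by exists t => //; rewrite t0 t1.
right; rewrite -/(G p (v :: s) t) G_ge1; last exact: ltW.
apply: IH; apply/andP; split; first by lra.
by move: ts; rewrite -natr1; lra.
Qed.

Lemma clamp_cont : continuous clamp.
Proof.
move=> x; rewrite /clamp.
apply: (@continuous_min _ _ (fun t => Num.max t 0) (fun _ => 1)); last exact: cvg_cst.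
apply: (@continuous_max _ _ id (fun _ => 0)); [exact: cvg_id|exact: cvg_cst].
Qed.

Lemma G_cont_comp p s :
  continuous (fun t => (G p s t).1) /\ continuous (fun t => (G p s t).2).
Proof.
elim: s p => [|v s IH] p /=.
  by split => x; exact: cvg_cst.
have [c1 c2] := IH v.
have sh : continuous (fun t : R => t - 1).
  by move=> x; apply: cvgB; [exact: cvg_id|exact: cvg_cst].
have cc1 : continuous (fun t => (G v s (t - 1)).1).
  move=> x; exact: (continuous_comp (sh x) (c1 (x - 1))).
have cc2 : continuous (fun t => (G v s (t - 1)).2).
  move=> x; exact: (continuous_comp (sh x) (c2 (x - 1))).
split => x; rewrite /lerp /=.
- apply: cvgD; last by apply: cvgB; [exact: cc1|exact: cvg_cst].
  apply: cvgD; first exact: cvg_cst.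
  apply: cvgMl; exact: clamp_cont.
- apply: cvgD; last by apply: cvgB; [exact: cc2|exact: cvg_cst].
  apply: cvgD; first exact: cvg_cst.
  apply: cvgMl; exact: clamp_cont.
Qed.

Lemma G_cont p s : continuous (G p s).
Proof.
have [c1 c2] := G_cont_comp p s.
have E : (fun t => ((G p s t).1, (G p s t).2)) = G p s.
  by apply: funext => t; rewrite -surjective_pairing.
move=> x; have := cvg_pair (c1 x) (c2 x). rewrite E => H.
exact: (H _ _ _).

Qed.

Lemma G_inj p s : simple p s -> forall t t', 0 <= t <= (size s)%:R ->
  0 <= t' <= (size s)%:R -> G p s t = G p s t' -> t = t'.
Proof.
elim: s p => [|v s IH] p.
  by move=> _ t t' /=; lra.
move=> [pv sv segv].
rewrite [size _]/=.
have Ns : (size s).+1%:R = (size s)%:R + 1 :> R by rewrite -natr1.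
have key : forall t t', 0 <= t <= 1 -> 1 <= t' <= (size s).+1%:R ->
    G p (v :: s) t = G p (v :: s) t' -> t = t'.
  move=> t t' /andP[t0 t1] /andP[t'1 t's].
  rewrite G_01 ?t0 ?t1 // G_ge1 // => E.
  have gi : img v s (G v s (t' - 1)).
    apply: G_img; apply/andP; split; first by lra.
    by move: t's; rewrite Ns; lra.
  have Ev : lerp p v t = v.
    apply: segv; split; first by exists t => //; rewrite t0 t1.
    by rewrite E.
  have t1' : t = 1 by apply: (lerp_inj pv); rewrite Ev lerp1.
  have : G v s (t' - 1) = G v s 0 by rewrite -E Ev G_le0.
  move/(IH v sv (t' - 1) 0) => H.
  have : t' - 1 = 0.
    apply: H; last by rewrite lexx ler0n.
    by apply/andP; split; [lra|move: t's; rewrite Ns; lra].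
  lra.
move=> t t' /andP[t0 ts] /andP[t'0 t's] E.
have [t1|t1] := lerP t 1; have [t'1|t'1] := lerP t' 1.
- by move: E; rewrite !G_01 ?t0 ?t1 ?t'0 ?t'1 // => /(lerp_inj pv).
- by apply: key => //; [rewrite t0 t1|rewrite t's ltW].
- by apply/esym; apply: key => //; [rewrite t'0 t'1|rewrite ts ltW].
- move: E; rewrite !G_ge1 ?ltW // => /(IH v sv) H.
  have : t - 1 = t' - 1.
    by apply: H; apply/andP; split; move: ts t's; rewrite Ns; lra.
  lra.
Qed.

Lemma G_cat1 p s1 s2 t : t <= (size s1)%:R -> G p (s1 ++ s2) t = G p s1 t.
Proof.
elim: s1 p t => [|v s IH] p t /=.
  by move=> t0; rewrite G_le0.
move=> ts.
have [t0|t0] := lerP t 0.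
  by rewrite -/(G p (v :: s ++ s2) t) -/(G p (v :: s) t) !G_le0.
have [t1|t1] := lerP t 1.
  by rewrite -/(G p (v :: s ++ s2) t) -/(G p (v :: s) t) !G_01 // ltW ?t0.
rewrite -/(G p (v :: s ++ s2) t) -/(G p (v :: s) t) !G_ge1 ?ltW //.
apply: IH; move: ts; rewrite -natr1; lra.
Qed.

Lemma G_cat2 p s1 s2 t : (size s1)%:R <= t ->
  G p (s1 ++ s2) t = G (last p s1) s2 (t - (size s1)%:R).
Proof.
elim: s1 p t => [|v s IH] p t /=.
  by rewrite subr0.
move=> ts.
rewrite -/(G p (v :: s ++ s2) t) G_ge1; last by move: ts; rewrite -natr1; have := ler0n R (size s); lra.
rewrite IH; last by move: ts; rewrite -natr1; lra.
by congr G; rewrite -natr1; ring.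
Qed.

Lemma G_end p s : G p s (size s)%:R = last p s.
Proof. by rewrite -{1}(cats0 s) G_cat2 // subrr. Qed.

Lemma G_start p s : G p s 0 = p.
Proof. by rewrite G_le0. Qed.

Lemma simple_cat p s1 s2 : simple p s1 -> simple (last p s1) s2 ->
  img p s1 `&` img (last p s1) s2 `<=` [set last p s1] -> simple p (s1 ++ s2).
Proof.
elim: s1 p => [|v s IH] p; first by move=> _ h _.
move=> /= [pv sv segv] h2 h3.
split => //.
- apply: IH => // x [x1 x2]; apply: h3; split => //; by right.
- rewrite img_cat => x [xs [xi|xl]].
    by apply: segv.
  have xe : x = last v s by apply: h3; split => //; left.
  apply: segv; split => //; rewrite xe; exact: img_last.
Qed.

End Arc.


Section Reach.
Variable R : realType.
Implicit Types (u v w p q y z : R * R) (s : seq (R * R)) (l m t : R) (U : set (R * R)).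

Definition reach U q x := exists s, last q s = x /\ img q s `<=` U.

Lemma ball_conv y z (e l : R) : ball y e z -> 0 <= l <= 1 ->
  ball y e (lerp z y l) /\ ball y e (lerp y z l).
Proof.
case: y z => y1 y2 [z1 z2] [h1 h2] /andP[l0 l1].
move: h1 h2; rewrite /ball /= => h1 h2.
have k1 : forall a b : R, `|a - b| < e -> `|a - (b + l * (a - b))| < e.
  move=> a b h; have -> : a - (b + l * (a - b)) = (1 - l) * (a - b) by ring.
  rewrite normrM ger0_norm ?subr_ge0 //; apply: le_lt_trans h.
  by rewrite ler_piMl // lerBlDr lerDl.
have k2 : forall a b : R, `|a - b| < e -> `|a - (a + l * (b - a))| < e.
  move=> a b h; have -> : a - (a + l * (b - a)) = l * (a - b) by ring.
  by rewrite normrM ger0_norm //; apply: le_lt_trans h; rewrite ler_piMl.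
by split; split; rewrite /ball /=; [apply: k1|apply: k1|apply: k2|apply: k2].
Qed.

Lemma open_conv U y : open U -> U y -> exists2 e : R, 0 < e &
  forall z, ball y e z -> forall l, 0 <= l <= 1 -> U (lerp z y l) /\ U (lerp y z l).
Proof.
rewrite openE => oU Uy; have := oU y Uy; rewrite /interior /= => /nbhs_ballP [e e0 eU].
exists e => // z yz l l01; have [? ?] := ball_conv yz l01; split; exact: eU.
Qed.

Lemma reach_sub U q x : reach U q x -> U x.
Proof. by move=> [s [<- sU]]; apply: sU; exact: img_last. Qed.

Lemma reach_ext U q z y : reach U q z -> seg z y `<=` U -> reach U q y.
Proof.
move=> [s [zs sU]] zy; exists (rcons s y); split; first by rewrite last_rcons.
by rewrite img_rcons zs => x [/sU|/zy].
Qed.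

Lemma reach_open U q : open U -> open (reach U q).
Proof.
move=> oU; rewrite openE => x rx.
have [e e0 He] := open_conv oU (reach_sub rx).
rewrite /interior /=; move: (nbhsx_ballx x e e0); apply: filterS => z xz.
by apply: reach_ext rx _ => w [l l01 ->]; case: (He z xz l l01).
Qed.

Lemma reach_cl U q y : open U -> U y -> closure (reach U q) y -> reach U q y.
Proof.
move=> oU Uy cy; have [e e0 He] := open_conv oU Uy.
have [z [rz yz]] := cy _ (nbhsx_ballx y e e0).
by apply: reach_ext rz _ => w [l l01 ->]; case: (He z yz l l01).
Qed.

Lemma reach_conn U q : open U -> connected U -> U q -> forall x, U x -> reach U q x.
Proof.
move=> oU cU Uq.
have rU : reach U q `<=` U by move=> x /reach_sub.
have E : reach U q = U.
  apply: cU.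
  - by exists q; exists [::]; split => // x /= ->.
  - by exists (reach U q); [exact: reach_open|rewrite setIidr].
  - exists (closure (reach U q)); first exact: closed_closure.
    apply/seteqP; split => x.
      by move=> rx; split; [exact: rU|exact: subset_closure].
    by move=> [Ux cx]; apply: reach_cl.
by rewrite E.
Qed.

End Reach.


Lemma open_in_nbhs {T : topologicalType} (O : set T) y : open O -> O y -> nbhs y O.
Proof. by rewrite openE => oO Oy; exact: oO. Qed.

Lemma nbhsI2 {T : topologicalType} (x : T) (A B C : set T) :
  nbhs x A -> nbhs x B -> A `&` B `<=` C -> nbhs x C.
Proof.
move=> h1 h2 h; have h3 := filterI h1 h2.
have h4 := h3 (nbhs_pfilter x); exact: filterS h h4.
Qed.

Lemma nbhsS1 {T : topologicalType} (x : T) (A C : set T) :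
  nbhs x A -> A `<=` C -> nbhs x C.
Proof. move=> h1 h; exact: filterS h h1. Qed.

Lemma nbhsT1 {T : topologicalType} (x : T) (C : set T) : (forall w, C w) -> nbhs x C.
Proof. move=> h; apply: (nbhsS1 (A := setT)) => //; exact: filterT. Qed.

Section Main.
Variable R : realType.
Variable n : nat.
Variable a : nat -> set (R * R).
Hypothesis n1 : (1 < n)%N.
Hypothesis hreg : forall i, (1 <= i <= n)%N -> regular_closed (a i).
Hypothesis hcon : forall i, (1 <= i <= n)%N -> connected ((union_from a i n)°).
Hypothesis hdot : forall i j, (1 <= i)%N -> (i < j)%N -> (j <= n)%N -> rdot (a i) (a j) = set0.
Hypothesis hdis : forall i j, (1 <= i)%N -> (i < j)%N -> (j <= n)%N -> (1 < j - i)%N ->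
     a i `&` a j = set0.
Variable pn : R * R.
Hypothesis hpn : (a n)° pn.

Definition V i := (a i `|` a i.+1)°.

Lemma Vn i (x : R * R) : V i x -> nbhs x (a i `|` a i.+1).
Proof. by []. Qed.

Lemma dis i j (x : R * R) : (1 <= i)%N -> (i.+2 <= j)%N -> (j <= n)%N -> a i x -> a j x -> False.
Proof.
move=> i1 ij jn hi hj.
have : (a i `&` a j) x by [].
rewrite hdis //; first by apply: leq_trans ij; rewrite ltnS leqnSn.
by rewrite ltn_subRL addn1.
Qed.

Lemma dotF i j (x : R * R) : (1 <= i)%N -> (i < j)%N -> (j <= n)%N -> nbhs x (a i `&` a j) -> False.
Proof.
move=> i1 ij jn h.
have : rdot (a i) (a j) x by apply: subset_closure.
by rewrite hdot.
Qed.

Lemma T1 i j (x : R * R) : (1 <= i)%N -> (i < j)%N -> (j <= n)%N -> (a i)° x -> (a j)° x -> False.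
Proof.
move=> i1 ij jn hi hj; apply: (dotF i1 ij jn).
exact: (nbhsI2 hi hj).
Qed.

Lemma T2 i (x : R * R) : (1 <= i)%N -> (i.+2 <= n)%N -> V i x -> V i.+1 x -> (a i.+1)° x.
Proof.
move=> i1 i2 h1 h2; have h1' := Vn h1; have h2' := Vn h2.
suff : nbhs x (a i.+1) by [].
apply: (nbhsI2 h1' h2').
move=> w [[h|h] [h'|h']] //; exfalso; exact: (dis i1 (leqnn _) i2 h h').
Qed.

Lemma T3 i j (x : R * R) : (1 <= i)%N -> (i.+2 <= j)%N -> (j.+1 <= n)%N -> V i x -> V j x -> False.
Proof.
move=> i1 ij jn h1 h2.
have h1' := Vn h1; have h2' := Vn h2.
have [E|ij'] := eqVneq j i.+2.
  subst j.
  apply: (@dotF i.+1 i.+2 x) => //; first by apply: ltnW.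
  apply: (nbhsI2 h1' h2').
  move=> w [[h|h] [h'|h']].
  - by exfalso; exact: (dis i1 (leqnn _) (ltnW jn) h h').
  - by exfalso; apply: (dis i1 _ jn h h').
  - by [].
  - by exfalso; apply: (dis (ltn0Sn i) (leqnn _) jn h h').
have ij3 : (i.+3 <= j)%N by rewrite ltn_neqAle eq_sym ij' ij.
have := interior_subset h1; have := interior_subset h2.
move=> [h|h] [h'|h'].
- by apply: (dis i1 _ (ltnW jn) h' h); apply: leq_trans ij3.
- by apply: (dis (ltn0Sn i) _ (ltnW jn) h' h); apply: leq_trans ij3.
- by apply: (dis i1 _ jn h' h); apply: leq_trans (ltnW ij3) _.
- by apply: (dis (ltn0Sn i) _ jn h' h); apply: leq_trans ij3 _.
Qed.

Lemma closed_a j : (1 <= j <= n)%N -> closed (a j).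
Proof. by move=> hj; rewrite -(hreg hj); exact: closed_closure. Qed.

Lemma nbhs_avoid i (y : R * R) : (forall j, (i.+2 <= j <= n)%N -> ~ a j y) ->
  forall k, (k <= n)%N -> nbhs y [set w | forall j, (i.+2 <= j <= k)%N -> ~ a j w].
Proof.
move=> Hy; elim => [|k IH] kn.
  apply: nbhsT1 => w j /andP[ij jk].
  by move: (leq_trans ij jk).
have [ik|ik] := leqP i.+2 k.+1; last first.
  apply: nbhsT1 => w j /andP[ij jk].
  by move: (leq_trans ij jk); rewrite leqNgt ik.
have hk : (1 <= k.+1 <= n)%N by rewrite kn andbT.
have o : nbhs y (~` a k.+1).
  apply: open_in_nbhs; first exact/closed_openC/closed_a.
  by apply: Hy; rewrite ik kn.
apply: (nbhsI2 (IH (ltnW kn)) o) => w [h1 h2] j /andP[ij jk].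
have [E|jk'] := eqVneq j k.+1; first by rewrite E.
by apply: h1; rewrite ij /= -ltnS ltn_neqAle jk' jk.
Qed.

Lemma union_sub i j : (i <= j <= n)%N -> a j `<=` union_from a i n.
Proof. by move=> h x ax; exists j. Qed.

Lemma stepA i (q : R * R) : (1 <= i)%N -> (i < n)%N -> (a i)° q ->
  exists r, (a i.+1)° r /\ reach (V i) q r.
Proof.
move=> i1 iln qi.
have [//|H] := pselect (exists r, (a i.+1)° r /\ reach (V i) q r).
exfalso.
pose C := reach (V i) q.
pose U := (union_from a i n)°.
have oV : open (V i) by exact: open_interior.
have oC : open C by exact: reach_open.
have VU : V i `<=` U.
  apply: interiorS => x [h|h]; [apply: (union_sub (j := i))|apply: (union_sub (j := i.+1))] => //.
  - by rewrite leqnn ltnW.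
  - by rewrite leqnSn iln.
have Cai : C `<=` a i.
  move=> x Cx; have := interior_subset (reach_sub Cx); case => // h.
  have hc : closure ((a i.+1)°) x by rewrite (hreg (i := i.+1)) // iln.
  have [r [r1 r2]] := hc _ (open_in_nbhs oC Cx).
  by exfalso; apply: H; exists r.
have Ci : C `<=` (a i)°.
  move=> x Cx; exact: (nbhsS1 (open_in_nbhs oC Cx)).
have Ccl : forall y, U y -> closure C y -> C y.
  move=> y Uy cy.
  have ya : a i y.
    rewrite -(hreg (i := i)); last by rewrite i1 ltnW.
    exact: (closureS Ci).
  have av : forall j, (i.+2 <= j <= n)%N -> ~ a j y.
    by move=> j /andP[ij jn] aj; apply: (dis i1 ij jn ya aj).
  have Vy : V i y.
    apply: (nbhsI2 Uy (nbhs_avoid av (leqnn n))).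
    move=> w [[j /andP[ij jn] aj] h].
    have [E|ij'] := eqVneq j i; first by left; rewrite -E.
    have [E'|ij''] := eqVneq j i.+1; first by right; rewrite -E'.
    exfalso; apply: (h j) => //; rewrite jn andbT.
    by rewrite ltn_neqAle eq_sym ij'' /= ltn_neqAle eq_sym ij' ij.
  exact: reach_cl.
have CU : C = U.
  apply: (hcon (i := i)); first by rewrite i1 ltnW.
  - exists q; exists [::]; split => // x /= ->.
    have sub : a i `<=` a i `|` a i.+1 by move=> w ?; left.
    exact: (interiorS sub qi).
  - by exists C => //; rewrite setIidr // => x /reach_sub /VU.
  - exists (closure C); first exact: closed_closure.
    apply/seteqP; split => x.
      move=> Cx; split; last exact: subset_closure.
      by apply: VU; exact: (reach_sub Cx).
    by move=> [Ux cx]; apply: Ccl.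
have : U pn.
  have hs : (i <= n <= n)%N by rewrite (ltnW iln) leqnn.
  exact: (interiorS (union_sub hs) hpn).
move=> Up; have Cp : C pn by rewrite CU.
have h := Ci pn Cp; exact: (T1 i1 iln (leqnn n) h hpn).
Qed.

Lemma stepB i (q : R * R) : i.+1 = n -> V i q -> forall x, V i x -> reach (V i) q x.
Proof.
move=> E Vq; apply: reach_conn => //; first exact: open_interior.
have -> : V i = (union_from a i n)°.
  rewrite /V; congr interior; apply/seteqP; split => x.
    by move=> [h|h]; [exists i|exists i.+1] => //; rewrite -E ?leqnSn ?leqnn.
  move=> [j /andP[ij jn] aj].
  have [E'|ij'] := eqVneq j i; first by left; rewrite -E'.
  right; suff -> : i.+1 = j by [].
  by apply/eqP; rewrite eqn_leq ltn_neqAle eq_sym ij' ij E jn.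
apply: hcon; have := n1; rewrite -E ltnS => ->; exact: leqnSn.
Qed.


Variable p1 : R * R.
Hypothesis hp1 : (a 1%N)° p1.

Definition Inv m (pts : nat -> R * R) (P : nat -> seq (R * R)) : Prop :=
  [/\ pts 1%N = p1,
     forall k, (1 <= k <= m)%N -> [/\ last (pts k) (P k) = pts k.+1, P k != [::],
        simple (pts k) (P k), img (pts k) (P k) `<=` V k & (a k)° (pts k)],
     forall k, (1 <= k)%N -> (k < m)%N ->
        img (pts k) (P k) `&` img (pts k.+1) (P k.+1) `<=` [set pts k.+1]
   & (a m.+1)° (pts m.+1)].

Lemma int_V i (x : R * R) : (a i)° x -> V i x.
Proof. by apply: interiorS => w ?; left. Qed.
Lemma int_V' i (x : R * R) : (a i.+1)° x -> V i x.
Proof. by apply: interiorS => w ?; right. Qed.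

Lemma base r : (a 2)° r -> reach (V 1) p1 r ->
  exists pts P, Inv 1 pts P /\ pts 2%N = r.
Proof.
move=> ar [s [ls sV]].
have [s' [h1 h2 h3]] := simplify p1 s.
exists (fun k => if k == 2%N then r else p1), (fun _ => s'); split => //.
split => //.
- move=> k /andP[k1 k2].
  have -> : k = 1%N by apply/eqP; rewrite eqn_leq k1 k2.
  split => //=.
  + by rewrite h2.
  + apply/eqP => E; move: h2; rewrite E /= ls => E'.
    by apply: (T1 (i := 1) (j := 2) (x := r)) => //; rewrite -E'.
  + by move=> x /h3 /sV.
- by move=> k k1 k2; move: (leq_trans k2 k1); rewrite ltnn.
Qed.

Lemma step m pts P r : (1 <= m)%N -> (m.+2 <= n)%N -> Inv m pts P ->
  (a m.+2)° r -> reach (V m.+1) (pts m.+1) r ->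
  exists pts' P', Inv m.+1 pts' P' /\ pts' m.+2 = r.
Proof.
move=> m1 mn [h0 h1 h2 h3] ar [s [ls sV]].
have hm : (1 <= m <= m)%N by rewrite m1 leqnn.
have [lm nm sm Vm am] := h1 m hm.
pose K := img (pts m) (P m).
have [y [s1 [Ky s1s s1K ls1]]] := hit (@img_closed R (pts m) (P m))
  (ex_intro _ (pts m.+1) (conj (@img_head R (pts m.+1) s) (eq_ind _ (fun z => img (pts m) (P m) z) (@img_last R (pts m) (P m)) _ lm))).
have [s2 [g1 g2 g3]] := simplify y s1.
have [s3 [f1 f2 f3]] := prefix sm Ky.
have Vy : V m.+1 y by apply: sV; apply: s1s; exact: img_head.
have ay : (a m.+1)° y by apply: T2 => //; apply: Vm.
pose pts' := fun k => if k == m.+1 then y else if k == m.+2 then r else pts k.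
pose P' := fun k => if k == m then s3 else if k == m.+1 then s2 else P k.
have ptsE : forall k, (k <= m)%N -> pts' k = pts k.
  move=> k km; rewrite /pts'.
  have -> : (k == m.+1) = false by apply/negbTE; rewrite neq_ltn ltnS km.
  by have -> : (k == m.+2) = false by apply/negbTE; rewrite neq_ltn ltnS (leq_trans km).
have PE : forall k, (k < m)%N -> P' k = P k.
  move=> k km; rewrite /P'.
  have -> : (k == m) = false by apply/negbTE; rewrite neq_ltn km.
  by have -> : (k == m.+1) = false by apply/negbTE; rewrite neq_ltn ltnS ltnW.
have p'1 : pts' m.+1 = y by rewrite /pts' eqxx.
have p'2 : pts' m.+2 = r.
  by rewrite /pts' (_ : (m.+2 == m.+1) = false) ?eqxx // ; apply/negbTE; rewrite neq_ltn ltnSn orbT.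
have P'1 : P' m = s3 by rewrite /P' eqxx.
have P'2 : P' m.+1 = s2.
  by rewrite /P' (_ : (m.+1 == m) = false) ?eqxx //; apply/negbTE; rewrite neq_ltn ltnSn orbT.
exists pts', P'; split => //; split.
- by rewrite ptsE.
- move=> k /andP[k1 km].
  have [km'|km'] := ltnP k m.
    rewrite PE // !ptsE ?(ltnW km') //.
    by apply: h1; rewrite k1 ltnW.
  have [E|E] := eqVneq k m.
    rewrite E P'1 ptsE // p'1; split => //.
    + apply/eqP => E'; move: f2; rewrite E' /= => E''.
      have mn' : (m.+1 <= n)%N by apply: ltnW.
      by apply: (T1 m1 (ltnSn m) mn' _ ay); rewrite -E''.
    + by move=> x /f3 /Vm.
  have -> : k = m.+1 by apply/eqP; rewrite eqn_leq km ltn_neqAle eq_sym E km'.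
  rewrite P'2 p'1 p'2; split => //.
  + by rewrite g2 ls1 ls.
  + apply/eqP => E'; move: g2; rewrite E' /= ls1 ls => E''.
    by apply: (T1 (ltn0Sn m) (ltnSn m.+1) mn _ ar); rewrite -E''.
  + by move=> x /g3 /s1s /sV.
- move=> k k1 km.
  have [km'|km'] := ltnP k.+1 m.
    have e1 : (k < m)%N by apply: ltnW.
    rewrite (PE _ e1) (PE _ km') (ptsE _ (ltnW km')) (ptsE _ (ltnW e1)).
    exact: h2 k k1 e1.
  have [E|E] := eqVneq k.+1 m.
    have ek : (k < m)%N by rewrite -E.
    rewrite E (PE _ ek) (ptsE _ (ltnW ek)) P'1 (ptsE _ (leqnn m)).
    move=> x [x1 /f3 x2]; have := h2 k k1 ek; rewrite E; apply; split => //.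
  have -> : k = m.
    apply/eqP; rewrite eqn_leq -ltnS km /=.
    by rewrite -ltnS ltn_neqAle eq_sym E km'.
  rewrite P'1 P'2 ptsE // p'1 => x [/f3 x1 /g3 x2]; apply: s1K; split => //.
- by rewrite p'2.
Qed.


Lemma chain_mid m : (1 <= m)%N -> (m.+2 <= n)%N -> exists pts P, Inv m pts P.
Proof.
elim: m => [//|m IH] _ mn.
have [m0|mpos] := eqVneq m 0%N.
  subst m.
  have [r [ar rr]] := stepA (i := 1) (q := p1) (isT : (1 <= 1)%N) n1 hp1.
  have [pts [P [inv _]]] := base ar rr.
  by exists pts, P.
have m1 : (1 <= m)%N by rewrite lt0n.
have [pts [P inv]] := IH m1 (ltnW mn).
have [_ _ _ am] := inv.
have [r [ar rr]] := stepA (i := m.+1) (q := pts m.+1) (ltn0Sn m) (ltnW mn) am.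
have [pts' [P' [inv' _]]] := step m1 (ltnW mn) inv ar rr.
by exists pts', P'.
Qed.

Lemma chain : exists pts P, Inv n.-1 pts P /\ pts n = pn.
Proof.
have [n3|n2] := ltnP 2 n; last first.
  have E : n = 2%N by apply/eqP; rewrite eqn_leq n2 n1.
  have ar : (a 2)° pn by rewrite -E.
  have rr : reach (V 1) p1 pn.
    apply: (stepB (i := 1)) => //; first exact: int_V.
    exact: int_V'.
  have [pts [P [inv e]]] := base ar rr.
  by exists pts, P; rewrite E.
have [k nk] : exists k, n = k.+3.
  by exists (n - 3)%N; rewrite -addn3 subnK.
have [pts [P inv]] := chain_mid (m := k.+1) (ltn0Sn k) (eq_ind_r (fun z => (k.+3 <= z)%N) (leqnn _) nk).
have [_ _ _ am] := inv.
have ar : (a k.+3)° pn by rewrite -nk.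
have rr : reach (V k.+2) (pts k.+2) pn.
  apply: (stepB (i := k.+2)) => //; first exact: int_V.
  exact: int_V'.
have [pts' [P' [inv' e]]] := step (ltn0Sn k) (eq_ind_r (fun z => (k.+3 <= z)%N) (leqnn _) nk) inv ar rr.
by exists pts', P'; rewrite nk.
Qed.


Lemma kN k : (k < n)%N -> (k <= n.-1)%N.
Proof. by move=> kn; rewrite -ltnS prednK // ltnW. Qed.

Lemma flat_last pts P : Inv n.-1 pts P -> forall l k, (1 <= k)%N -> (k + l <= n)%N ->
  last (pts k) (flatten [seq P j | j <- iota k l]) = pts (k + l)%N.
Proof.
move=> [_ h1 _ _]; elim => [|l IH] k k1 kl; first by rewrite addn0.
have kn : (k < n)%N by apply: leq_trans kl; rewrite addnS ltnS leq_addr.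
have hk : (1 <= k <= n.-1)%N by rewrite k1 kN.
have [lk _ _ _ _] := h1 k hk.
rewrite /= last_cat lk IH //; first by rewrite addSnnS.
by rewrite addSnnS.
Qed.

Lemma flat_img pts P : Inv n.-1 pts P -> forall l k x, (1 <= k)%N -> (k + l <= n)%N ->
  img (pts k) (flatten [seq P j | j <- iota k l]) x ->
  x = pts k \/ exists2 j, (k <= j < k + l)%N & img (pts j) (P j) x.
Proof.
move=> inv; have [_ h1 _ _] := inv; elim => [|l IH] k x k1 kl; first by left.
have kn : (k < n)%N by apply: leq_trans kl; rewrite addnS ltnS leq_addr.
have hk : (1 <= k <= n.-1)%N by rewrite k1 kN.
have [lk _ _ _ _] := h1 k hk.
rewrite /= img_cat lk => -[xi|xi].
  by right; exists k => //; rewrite leqnn /= addnS ltnS leq_addr.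
have hl : (k.+1 + l <= n)%N by rewrite addSnnS.
case: (IH k.+1 x (ltn0Sn k) hl xi) => [->|[j /andP[j1 j2] jx]].
  by right; exists k; rewrite ?leqnn //= ?addnS ?ltnS ?leq_addr //; rewrite -lk; exact: img_last.
right; exists j => //.
by rewrite (ltnW j1) /= addnS -addSn.
Qed.

Lemma flat_simple pts P : Inv n.-1 pts P -> forall l k, (1 <= k)%N -> (k + l = n)%N ->
  simple (pts k) (flatten [seq P j | j <- iota k l]).
Proof.
move=> inv; have [_ h1 h2 _] := inv; elim => [|l IH] k k1 kl //.
have kn : (k < n)%N by rewrite -kl addnS ltnS leq_addr.
have hk : (1 <= k <= n.-1)%N by rewrite k1 kN.
have [lk _ sk Vk _] := h1 k hk.
rewrite /=; apply: simple_cat => //.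
- by rewrite lk; apply: IH => //; rewrite addSnnS.
- rewrite lk => x [x1 x2].
  have hl : (k.+1 + l <= n)%N by rewrite addSnnS kl.
  case: (flat_img inv (ltn0Sn k) hl x2) => [//|[j /andP[j1 j2] jx]].
  have [E|E] := eqVneq j k.+1.
    rewrite E in jx; apply: (h2 k k1); last by split.
    move: j2 kl; rewrite E; lia.
  exfalso; apply: (T3 (i := k) (j := j) (x := x) k1).
  - by rewrite ltn_neqAle eq_sym E j1.
  - by rewrite -kl -addSnnS.
  - exact: Vk.
  - have hj : (1 <= j <= n.-1)%N.
      by rewrite (leq_trans (ltn0Sn k) j1) kN // -kl -addSnnS.
    by have [_ _ _ Vj _] := h1 j hj; apply: Vj.
Qed.


Lemma main : exists (g : R -> R * R) (t : nat -> R),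
    [/\ jordan_param g 0 1, g 0 = p1 /\ g 1 = pn,
        t 1%N = 0, t n = 1 &
        forall i, (1 <= i < n)%N ->
          [/\ t i < t i.+1,
              arc_image g (t i) (t i.+1) `<=` (a i `|` a i.+1)°
            & (a i)° (g (t i))]].
Proof.
have [pts [P [inv ptn]]] := chain.
have [h0 h1 h2 h3] := inv.
pose A k := flatten [seq P j | j <- iota 1 k.-1].
pose S := A n.
have simS : simple p1 S.
  rewrite -h0; apply: (flat_simple inv) => //; lia.
have lastA : forall k, (1 <= k <= n)%N -> last p1 (A k) = pts k.
  move=> k /andP[k1 kn]; rewrite -h0 /A (flat_last inv) //; last by lia.
  by congr pts; lia.
have splitS : forall i, (1 <= i < n)%N ->
    S = A i ++ (P i ++ flatten [seq P j | j <- iota i.+1 (n - i.+1)]).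
  move=> i /andP[i1 i2]; rewrite /S /A.
  have -> : n.-1 = (i.-1 + (n - i.+1).+1)%N by lia.
  rewrite iotaD map_cat flatten_cat.
  by have -> : (1 + i.-1)%N = i by lia.
have sizeA : forall i, (1 <= i)%N -> size (A i.+1) = (size (A i) + size (P i))%N.
  move=> i i1; rewrite /A /=.
  have -> : i = (i.-1 + 1)%N by lia.
  rewrite iotaD map_cat flatten_cat size_cat.
  have -> : (1 + i.-1)%N = (i.-1 + 1)%N by lia.
  by rewrite /= cats0 addn1 /=.
have hP : forall i, (1 <= i < n)%N -> [/\ last (pts i) (P i) = pts i.+1, P i != [::],
        simple (pts i) (P i), img (pts i) (P i) `<=` V i & (a i)° (pts i)].
  by move=> i /andP[i1 i2]; apply: h1; rewrite i1 kN.
have A1 : A 1%N = [::] by [].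
have Spos : (0 < size S)%N.
  have h : (1 <= 1 < n)%N by rewrite n1.
  rewrite (splitS 1%N h) A1 /= size_cat.
  have [_ nz _ _ _] := hP 1%N h.
  by rewrite lt0n addn_eq0 negb_and size_eq0 nz.
pose M : R := (size S)%:R.
have Mpos : 0 < M by rewrite /M ltr0n.
have M0 : M != 0 by rewrite gt_eqF.
pose g := fun x : R => G p1 S (x * M).
pose t := fun k => (size (A k))%:R / M.
have tM : forall k, t k * M = (size (A k))%:R by move=> k; rewrite /t divfK.
exists g, t; split.
- split.
  + apply: continuous_subspaceT => x.
    have cm : continuous (fun x : R => x * M) by move=> y; apply: cvgMl; exact: cvg_id.
    exact: (continuous_comp (cm x) (@G_cont R p1 S (x * M))).
  + move=> x y; rewrite !in_setE /= !in_itv /= => /andP[x0 x1] /andP[y0 y1] E.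
    have rg : forall z : R, 0 <= z <= 1 -> 0 <= z * M <= (size S)%:R.
      move=> z /andP[z0 z1]; apply/andP; split; first exact: mulr_ge0 z0 (ltW Mpos).
      by rewrite -/M -[leRHS]mul1r ler_pM2r.
    have := G_inj simS (rg x _) (rg y _) E; rewrite ?x0 ?x1 ?y0 ?y1 => /(_ isT isT).
    by move/(mulIf M0).
- split.
  + by rewrite /g mul0r G_start.
  + rewrite /g mul1r /M G_end.
    have h : (1 <= n <= n)%N by rewrite (ltnW n1) leqnn.
    by rewrite /S lastA.
- by rewrite /t A1 /= mul0r.
- by rewrite /t -/S -/M divff.
- move=> i hi; have /andP[i1 i2] := hi.
  have [lP nz sP VP aP] := hP i hi.
  have sAi : (size (A i.+1))%:R = (size (A i))%:R + (size (P i))%:R :> R.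
    by rewrite sizeA // natrD.
  have Pgt : 0 < (size (P i))%:R :> R by rewrite ltr0n lt0n size_eq0.
  have gE : forall tau, (size (A i))%:R <= tau ->
      G p1 S tau = G (pts i) (P i ++ flatten [seq P j | j <- iota i.+1 (n - i.+1)])
                     (tau - (size (A i))%:R).
    move=> tau ht; rewrite {1}(splitS i hi) G_cat2 // lastA //.
    by rewrite i1 ltnW.
  split.
  + rewrite /t ltr_pM2r ?invr_gt0 // sAi; lra.
  + move=> z [x]; rewrite /= in_itv /= => /andP[xa xb] <-.
    have ha : (size (A i))%:R <= x * M by rewrite -tM ler_pM2r.
    have hb : x * M <= (size (A i))%:R + (size (P i))%:R by rewrite -sAi -tM ler_pM2r.
    rewrite /g gE // G_cat1; last by lra.
    apply: VP; apply: G_img; apply/andP; split; lra.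
  + rewrite /g tM gE ?lexx // subrr G_start; exact: aP.
Qed.

End Main.

Unset Implicit Arguments.

Theorem lemma5p3 (R : realType) (n : nat) (a : nat -> set (R * R)) :
  (1 < n)%N ->
  (forall i, (1 <= i <= n)%N -> regular_closed (a i)) ->
  (forall i, (1 <= i <= n)%N -> connected ((union_from a i n)°)) ->
  (forall i j, (1 <= i)%N -> (i < j)%N -> (j <= n)%N -> rdot (a i) (a j) = set0) ->
  (forall i j, (1 <= i)%N -> (i < j)%N -> (j <= n)%N -> (1 < j - i)%N ->
     a i `&` a j = set0) ->
  forall p1 pn : R * R, (a 1%N)° p1 -> (a n)° pn ->
  exists (g : R -> R * R) (t : nat -> R),
    [/\ jordan_param g 0 1, g 0 = p1 /\ g 1 = pn,
        t 1%N = 0, t n = 1 &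
        forall i, (1 <= i < n)%N ->
          [/\ t i < t i.+1,
              arc_image g (t i) (t i.+1) `<=` (a i `|` a i.+1)°
            & (a i)° (g (t i))]].
Proof.
move=> n1 hreg hcon hdot hdis p1 pn hp1 hpn.
exact: (main n1 hreg hcon hdot hdis hpn hp1).
Qed.
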